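(* For every integer $n\ge 4$, \[ \gamma_{2t}(K_n\Box K_{n+2})=\begin{cases}(3n+4)/2, & n\equiv 0\pmod 2,\\ (3n+3)/2, & n\equiv 1\pmod 4,\\ (3n+5)/2, & n\equiv 3\pmod 4.\end{cases} \]
   Context: For a graph $G=(V,E)$, a set $S\subseteq V$ is a total $2$-dominating set if every vertex of $V$ (including those in $S$) is adjacent to at least $2$ vertices of $S$; $\gamma_{2t}(G)$ is the minimum cardinality of such a set. $G\Box H$ denotes the Cartesian product: vertex set $V(G)\times V(H)$, with $(u_1,v_1)\sim(u_2,v_2)$ iff either $u_1=u_2$ and $v_1\sim v_2$, or $v_1=v_2$ and $u_1\sim u_2$. $K_n$ is the complete graph on $n$ vertices. *)

(* Defs.v *)
From mathcomp Require Import all_boot.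
Set Implicit Arguments. Unset Strict Implicit. Unset Printing Implicit Defensive.

Definition Kadj (n : nat) : rel 'I_n := fun u v => u != v.

Definition cartadj (T U : finType) (e : rel T) (f : rel U) : rel (T * U) :=
  fun x y => ((x.1 == y.1) && f x.2 y.2) || ((x.2 == y.2) && e x.1 y.1).

Definition total2dom (T : finType) (e : rel T) (S : {set T}) : bool :=
  [forall v : T, 2 <= #|[set u in S | e v u]|].

(* gamma_{2t}(G): minimum cardinality of a total 2-dominating set
   (defaults to #|T|.+1 if none exists). *)
Definition gamma2t (T : finType) (e : rel T) : nat :=
  \big[minn/#|T|.+1]_(S : {set T} | total2dom e S) #|S|.

Definition KK (n m : nat) : rel ('I_n * 'I_m) := cartadj (@Kadj n) (@Kadj m).
Arguments KK n m : clear implicits.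

(* Main.v *)
Require Import Defs.
From mathcomp Require Import all_boot zify.
Set Implicit Arguments. Unset Strict Implicit. Unset Printing Implicit Defensive.

Section Gen.
Variables (n m : nat) (S : {set 'I_n * 'I_m}).
Definition rowS i := [set u in S | u.1 == i].
Definition colS j := [set u in S | u.2 == j].

Lemma nbr_card v : #|[set u in S | KK n m v u]| + 2 * (v \in S) = #|rowS v.1| + #|colS v.2|.
Proof.
case: v => c d.
have D0 : (rowS c :\ (c,d)) :&: (colS d :\ (c,d)) = set0.
  apply/setP => u; rewrite !inE.
  case: u => a b /=; rewrite -!pair_eqE /=.
  by case: (a =P c) => [->|ne]; case: (b =P d) => [->|ne']; rewrite ?eqxx ?andbF //; rewrite andbC.
have E : [set u in S | KK n m (c,d) u] = (rowS c :\ (c,d)) :|: (colS d :\ (c,d)).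
  apply/setP => u; rewrite !inE /KK /cartadj /Kadj.
  case: u => a b /=; rewrite -!pair_eqE /=.
  rewrite [c == a]eq_sym [d == b]eq_sym.
  have [->|ne] := eqVneq a c; have [->|ne'] := eqVneq b d; rewrite ?eqxx ?ne ?ne' /= ?andbT ?andbF ?orbF //.
rewrite E cardsU.
rewrite D0 cards0 subn0.
rewrite [#|rowS c|](cardsD1 (c,d)) [#|colS d|](cardsD1 (c,d)).
have -> : ((c,d) \in rowS c) = ((c,d) \in S) by rewrite inE eqxx andbT.
have -> : ((c,d) \in colS d) = ((c,d) \in S) by rewrite inE eqxx andbT.
set x := #|rowS c :\ _|; set y := #|colS d :\ _|; set z := nat_of_bool _. lia.
Qed.

Lemma sum_rows : \sum_(i < n) #|rowS i| = #|S|.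
Proof.
rewrite -sum1_card (partition_big (fun u : 'I_n * 'I_m => u.1) predT) //=.
apply: eq_bigr => i _; rewrite -sum1_card; apply: eq_bigl => u; by rewrite inE.
Qed.

Lemma sum_cols : \sum_(j < m) #|colS j| = #|S|.
Proof.
rewrite -sum1_card (partition_big (fun u : 'I_n * 'I_m => u.2) predT) //=.
apply: eq_bigr => i _; rewrite -sum1_card; apply: eq_bigl => u; by rewrite inE.
Qed.

Local Notation r i := #|rowS i|.
Local Notation c j := #|colS j|.

Hypothesis H2 : forall v, 2 + 2 * (v \in S) <= r v.1 + c v.2.
Hypothesis Hr : forall i, 0 < r i.
Hypothesis Hc : forall j, 0 < c j.

Definition grow (u : 'I_n * 'I_m) := if r u.1 == 1 then 3 else if c u.2 == 1 then 1 else 2.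
Definition gcol (u : 'I_n * 'I_m) := if c u.2 == 1 then 3 else if r u.1 == 1 then 1 else 2.
Definition bad i : nat := (r i != 1) && (r i != 3).

Lemma split4 : 4 * #|S| = \sum_(u in S) grow u + \sum_(u in S) gcol u.
Proof.
rewrite -big_split /= mulnC -sum_nat_const; apply: eq_bigr => u uS.
have := H2 u; rewrite uS /grow /gcol.
set x := r u.1; set y := c u.2.
by case: eqP => ex; case: eqP => ey; lia.
Qed.

Lemma row_bound i : 3 + bad i <= \sum_(u in rowS i) grow u.
Proof.
rewrite /bad.
have [e1|n1] := eqVneq (r i) 1.
  move/eqP: (e1) => /cards1P [x ex]; rewrite ex big_set1 /grow.
  have : x \in rowS i by rewrite ex set11.
  by rewrite inE => /andP [_ /eqP ->]; rewrite e1.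
have [e2|n2] := eqVneq (r i) 2.
  have -> : \sum_(u in rowS i) grow u = \sum_(u in rowS i) 2.
    apply: eq_bigr => u; rewrite inE => /andP [uS /eqP ui].
    have := H2 u; rewrite uS /grow ui e2 /=.
    set y := c u.2; case: eqP; lia.
  by rewrite sum_nat_const e2.
apply: leq_trans (_ : r i <= _).
  have := Hr i; set x := r i; case: eqP; lia.
rewrite -sum1_card; apply: leq_sum => u _; rewrite /grow.
by case: ifP => //; case: ifP.
Qed.

Lemma col_bound j : 3 <= \sum_(u in colS j) gcol u.
Proof.
have [e1|n1] := eqVneq (c j) 1.
  move/eqP: (e1) => /cards1P [x ex]; rewrite ex big_set1 /gcol.
  have : x \in colS j by rewrite ex set11.
  by rewrite inE => /andP [_ /eqP ->]; rewrite e1.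
have [e2|n2] := eqVneq (c j) 2.
  have -> : \sum_(u in colS j) gcol u = \sum_(u in colS j) 2.
    apply: eq_bigr => u; rewrite inE => /andP [uS /eqP ui].
    have := H2 u; rewrite uS /gcol ui e2 /=.
    set y := r u.1; case: eqP; lia.
  by rewrite sum_nat_const e2.
apply: leq_trans (_ : c j <= _).
  have := Hc j; set x := c j; lia.
rewrite -sum1_card; apply: leq_sum => u _; rewrite /gcol.
by case: ifP => //; case: ifP.
Qed.

Lemma charge : 3 * n + 3 * m + \sum_(i < n) bad i <= 4 * #|S|.
Proof.
rewrite split4.
rewrite (partition_big (fun u : 'I_n * 'I_m => u.1) predT) //=.
rewrite [X in _ <= _ + X](partition_big (fun u : 'I_n * 'I_m => u.2) predT) //=.
have E1 : 3 * n + \sum_(i < n) bad i <= \sum_(i < n) \sum_(u | (u \in S) && (u.1 == i)) grow u.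
  have -> : 3 * n + \sum_(i < n) bad i = \sum_(i < n) (3 + bad i).
    by rewrite big_split /= sum_nat_const card_ord mulnC.
  apply: leq_sum => i _; apply: leq_trans (row_bound i) _.
  by rewrite leq_eqVlt; apply/orP; left; apply/eqP; apply: eq_bigl => u; rewrite inE.
have E2 : 3 * m <= \sum_(j < m) \sum_(u | (u \in S) && (u.2 == j)) gcol u.
  have -> : 3 * m = \sum_(j < m) 3 by rewrite sum_nat_const card_ord mulnC.
  apply: leq_sum => j _; apply: leq_trans (col_bound j) _.
  by rewrite leq_eqVlt; apply/orP; left; apply/eqP; apply: eq_bigl => u; rewrite inE.
move: E1 E2.
set a := \sum_(i < n) bad i; set b := \sum_(i < n) _; set d := \sum_(j < m) _.
lia.
Qed.

Lemma nobad : \sum_(i < n) bad i = 0 -> #|S| = n + 2 * \sum_(i < n) (r i == 3).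
Proof.
move/eqP; rewrite sum_nat_eq0 => /forallP Hb.
rewrite -sum_rows.
have -> : \sum_(i < n) r i = \sum_(i < n) (1 + 2 * (r i == 3)).
  apply: eq_bigr => i _; have := Hb i; rewrite /bad.
  set x := r i. case: (x =P 1) => [->//|/eqP h1]; case: (x =P 3) => [->//|/eqP h3].
  by [].
by rewrite big_split /= sum_nat_const card_ord muln1 -big_distrr.
Qed.

End Gen.

Definition target n := if ~~ odd n then (3 * n + 4) %/ 2
    else if n %% 4 == 1 then (3 * n + 3) %/ 2 else (3 * n + 5) %/ 2.

Lemma target_le n k : 4 <= n -> 2 * n <= k -> target n <= k.
Proof.
move=> n4 h; rewrite /target; have := modn2 n.
case: (odd n) => /= e; first case: ifP => /eqP e4; lia.
Qed.

Lemma H2_of n m (S : {set 'I_n * 'I_m}) : total2dom (KK n m) S ->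
  forall v, 2 + 2 * (v \in S) <= #|rowS S v.1| + #|colS S v.2|.
Proof.
move/forallP => H v; have := H v; have := nbr_card S v.
set x := #|[set _ in S | _]|; set y := #|rowS _ _|; set z := #|colS _ _|.
case: (v \in S) => /=; lia.
Qed.

Lemma lower n (S : {set 'I_n * 'I_(n+2)}) : 4 <= n -> total2dom (KK n (n+2)) S -> target n <= #|S|.
Proof.
move=> n4 T; have H2 := H2_of T.
case: (boolP [exists i, #|rowS S i| == 0]) => [/existsP [i /eqP ri] | /existsPn Hr].
  apply: target_le => //.
  have : \sum_(j < n+2) 2 <= #|S|.
    rewrite -sum_cols; apply: leq_sum => j _; have := H2 (i,j); rewrite /= ri.
    set y := #|colS _ _|; case: (_ \in S) => /=; lia.
  rewrite sum_nat_const card_ord; lia.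
case: (boolP [exists j, #|colS S j| == 0]) => [/existsP [j /eqP cj] | /existsPn Hc].
  apply: target_le => //.
  have : \sum_(i < n) 2 <= #|S|.
    rewrite -sum_rows; apply: leq_sum => i _; have := H2 (i,j); rewrite /= cj.
    set y := #|rowS _ _|; case: (_ \in S) => /=; lia.
  rewrite sum_nat_const card_ord; lia.
have Hr' : forall i, 0 < #|rowS S i| by move=> i; rewrite lt0n; apply: Hr.
have Hc' : forall j, 0 < #|colS S j| by move=> j; rewrite lt0n; apply: Hc.
have Ch := charge H2 Hr' Hc'.
have Nb := @nobad n (n+2) S.
move: Ch Nb; set B := \sum_(i < n) _; set T3 := \sum_(i < n) _; set K := #|S|.
move=> Ch Nb.
rewrite /target; have := modn2 n.
case: (odd n) => /= e; last lia.
case: ifP => /eqP e4; first lia.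
have [B0|Bp] := eqVneq B 0.
  have := Nb B0; lia.
have : 0 < B by rewrite lt0n.
lia.
Qed.

Definition Good n m (S : {set 'I_n * 'I_m}) :=
  [&& total2dom (KK n m) S, [forall i, exists j, (i,j) \in S] & [forall j, exists i, (i,j) \in S]].

Definition Up n m k := exists S : {set 'I_n * 'I_m}, Good S /\ #|S| <= k.

Lemma two_wit (T : finType) (A : {set T}) u1 u2 : u1 \in A -> u2 \in A -> u1 != u2 -> 1 < #|A|.
Proof.
move=> h1 h2 ne; apply: leq_trans (subset_leq_card (_ : [set u1; u2] \subset A)).
  by rewrite cards2 ne.
by apply/subsetP => x; rewrite !inE => /orP [] /eqP ->.
Qed.

Lemma splitO n p (i : 'I_(n+p)) : (exists a, i = lshift p a) \/ (exists x, i = rshift n x).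
Proof.
case: (splitP i) => [a e|x e]; [left; exists a|right; exists x]; apply/val_inj => /=; by rewrite e.
Qed.

Lemma eq_ll n p (a b : 'I_n) : (lshift p a == lshift p b) = (a == b).
Proof. exact: (inj_eq (@lshift_inj _ _)). Qed.
Lemma eq_rr n p (a b : 'I_p) : (rshift n a == rshift n b) = (a == b).
Proof. exact: (inj_eq (@rshift_inj _ _)). Qed.
Lemma eq_lr n p (a : 'I_n) (b : 'I_p) : (lshift p a == rshift n b) = false.
Proof. apply/negbTE/eqP => /(congr1 val) /=; have := ltn_ord a; lia. Qed.
Lemma eq_rl n p (a : 'I_n) (b : 'I_p) : (rshift n b == lshift p a) = false.
Proof. by rewrite eq_sym eq_lr. Qed.

Section Dsum.
Variables (n m p q : nat) (S : {set 'I_n * 'I_m}) (T : {set 'I_p * 'I_q}).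
Definition fl (u : 'I_n * 'I_m) : 'I_(n+p) * 'I_(m+q) := (lshift p u.1, lshift q u.2).
Definition fr (u : 'I_p * 'I_q) : 'I_(n+p) * 'I_(m+q) := (rshift n u.1, rshift m u.2).
Definition dsum := (fl @: S) :|: (fr @: T).

Lemma fl_inj : injective fl.
Proof. by move=> [a b] [c d] /(congr1 (fun w => (val w.1, val w.2))) /= [] /val_inj -> /val_inj ->. Qed.
Lemma fr_inj : injective fr.
Proof. by move=> [a b] [c d] /(congr1 (fun w => (val w.1, val w.2))) /= [] /addnI /val_inj -> /addnI /val_inj ->. Qed.

Lemma dsum_card : #|dsum| <= #|S| + #|T|.
Proof.
rewrite cardsU; apply: leq_trans (leq_subr _ _) _.
by apply: leq_add; apply: leq_imset_card.
Qed.

Lemma memL u : u \in S -> fl u \in dsum.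
Proof. by move=> h; rewrite inE imset_f. Qed.
Lemma memR u : u \in T -> fr u \in dsum.
Proof. by move=> h; rewrite inE imset_f ?orbT. Qed.

Lemma dsum_good : Good S -> Good T -> Good dsum.
Proof.
case/and3P => /forallP GS /forallP RS /forallP CS.
case/and3P => /forallP GT /forallP RT /forallP CT.
apply/and3P; split.
- apply/forallP => -[i j].
  case: (splitO i) => [[a ->]|[x ->]]; case: (splitO j) => [[b ->]|[y ->]].
  + apply: leq_trans (GS (a,b)) _.
    rewrite -(card_imset _ fl_inj); apply: subset_leq_card; apply/subsetP => w.
    case/imsetP => -[u1 u2]; rewrite inE => /andP [uS adj] ->.
    rewrite inE memL //= /KK /cartadj /Kadj /= !eq_ll; exact: adj.
  + have [b0 h1] := existsP (RS a); have [x0 h2] := existsP (CT y).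
    apply: (@two_wit _ _ (fl (a,b0)) (fr (x0,y))).
    * by rewrite inE memL //= /KK /cartadj /Kadj /= eq_ll eqxx eq_rl.
    * by rewrite inE memR //= /KK /cartadj /Kadj /= eq_rr eqxx eq_lr orbT.
    * by rewrite /fl /fr /= -pair_eqE /= eq_lr.
  + have [a0 h1] := existsP (CS b); have [y0 h2] := existsP (RT x).
    apply: (@two_wit _ _ (fl (a0,b)) (fr (x,y0))).
    * by rewrite inE memL //= /KK /cartadj /Kadj /= eq_ll eqxx eq_rl orbT.
    * by rewrite inE memR //= /KK /cartadj /Kadj /= eq_rr eqxx eq_lr.
    * by rewrite /fl /fr /= -pair_eqE /= eq_lr.
  + apply: leq_trans (GT (x,y)) _.
    rewrite -(card_imset _ fr_inj); apply: subset_leq_card; apply/subsetP => w.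
    case/imsetP => -[u1 u2]; rewrite inE => /andP [uS adj] ->.
    rewrite inE memR //= /KK /cartadj /Kadj /= !eq_rr; exact: adj.
- apply/forallP => i; case: (splitO i) => [[a ->]|[x ->]].
  + have [b0 h] := existsP (RS a); apply/existsP; exists (lshift q b0); exact: (memL h).
  + have [y0 h] := existsP (RT x); apply/existsP; exists (rshift m y0); exact: (memR h).
- apply/forallP => j; case: (splitO j) => [[b ->]|[y ->]].
  + have [a0 h] := existsP (CS b); apply/existsP; exists (lshift p a0); exact: (memL h).
  + have [x0 h] := existsP (CT y); apply/existsP; exists (rshift n x0); exact: (memR h).
Qed.
End Dsum.

Lemma dsum_up n m p q k k' : Up n m k -> Up p q k' -> Up (n+p) (m+q) (k+k').
Proof.
move=> [S [GS cS]] [T [GT cT]]; exists (dsum S T); split; first exact: dsum_good.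
by apply: leq_trans (dsum_card S T) _; apply: leq_add.
Qed.

Lemma card_ordP m (f : nat -> bool) : #|[set j : 'I_m | f j]| = count f (iota 0 m).
Proof.
rewrite cardE /enum_mem size_filter -enumT -val_enum_ord count_map.
by apply: eq_count => j; rewrite /= inE.
Qed.

Definition check n m (P : nat -> nat -> bool) :=
  [&& all (fun i => all (fun j => 2 + 2 * P i j <= count (P i) (iota 0 m) + count (fun i' => P i' j) (iota 0 n)) (iota 0 m)) (iota 0 n),
      all (fun i => has (P i) (iota 0 m)) (iota 0 n) &
      all (fun j => has (fun i => P i j) (iota 0 n)) (iota 0 m)].

Definition pset n m (P : nat -> nat -> bool) : {set 'I_n * 'I_m} := [set u : 'I_n * 'I_m | P u.1 u.2].

Lemma rowE n m P (i : 'I_n) : #|rowS (pset n m P) i| = count (P i) (iota 0 m).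
Proof.
have inj : injective (fun j : 'I_m => (i, j)) by move=> x y [].
have -> : rowS (pset n m P) i = (fun j => (i,j)) @: [set j : 'I_m | P i j].
  apply/setP => -[a b]; rewrite !inE /=; apply/andP/imsetP => [[Pab /eqP e]|[j Pj [-> ->]]].
    by exists b; rewrite ?inE -?e.
  by move: Pj; rewrite inE => ->.
by rewrite (card_imset _ inj) card_ordP.
Qed.

Lemma colE n m P (j : 'I_m) : #|colS (pset n m P) j| = count (fun i => P i j) (iota 0 n).
Proof.
have inj : injective (fun i : 'I_n => (i, j)) by move=> x y [].
have -> : colS (pset n m P) j = (fun i => (i,j)) @: [set i : 'I_n | P i j].
  apply/setP => -[a b]; rewrite !inE /=; apply/andP/imsetP => [[Pab /eqP e]|[i Pi [-> ->]]].
    by exists a; rewrite ?inE -?e.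
  by move: Pi; rewrite inE => ->.
by rewrite (card_imset _ inj) (card_ordP n (fun i => P i j)).
Qed.

Lemma check_good n m P : check n m P -> Good (pset n m P).
Proof.
case/and3P => /allP Hc /allP Hrow /allP Hcol.
apply/and3P; split.
- apply/forallP => -[i j]; have := nbr_card (pset n m P) (i,j).
  rewrite rowE colE inE /=.
  have hi : (i : nat) \in iota 0 n by rewrite mem_iota add0n ltn_ord.
  have hj : (j : nat) \in iota 0 m by rewrite mem_iota add0n ltn_ord.
  have := allP (Hc i hi) j hj.
  set x := #|[set _ in _ | _]|; set y := count _ _; set z := count _ _.
  case: (P i j) => /=; lia.
- apply/forallP => i; have hi : (i : nat) \in iota 0 n by rewrite mem_iota add0n ltn_ord.
  have /hasP [j jin Pj] := Hrow i hi.
  move: jin; rewrite mem_iota /= => jlt; apply/existsP; exists (Ordinal jlt); by rewrite inE.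
- apply/forallP => j; have hj : (j : nat) \in iota 0 m by rewrite mem_iota add0n ltn_ord.
  have /hasP [i iin Pj] := Hcol j hj.
  move: iin; rewrite mem_iota /= => ilt; apply/existsP; exists (Ordinal ilt); by rewrite inE.
Qed.

Lemma pset_card n m P : #|pset n m P| = \sum_(i < n) count (P i) (iota 0 m).
Proof. by rewrite -sum_rows; apply: eq_bigr => i _; rewrite rowE. Qed.

Lemma up_pset n m P k : check n m P -> \sum_(i < n) count (P i) (iota 0 m) <= k -> Up n m k.
Proof. by move=> h1 h2; exists (pset n m P); rewrite pset_card check_good. Qed.

Lemma upSR3 : Up 1 3 3.
Proof. apply: (@up_pset _ _ (fun _ _ => true)); first by vm_compute. by rewrite !big_ord_recr big_ord0. Qed.
Lemma upSC3 : Up 3 1 3.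
Proof. apply: (@up_pset _ _ (fun _ _ => true)); first by vm_compute. by rewrite !big_ord_recr big_ord0. Qed.
Lemma upSR4 : Up 1 4 4.
Proof. apply: (@up_pset _ _ (fun _ _ => true)); first by vm_compute. by rewrite !big_ord_recr big_ord0. Qed.
Lemma upSC4 : Up 4 1 4.
Proof. apply: (@up_pset _ _ (fun _ _ => true)); first by vm_compute. by rewrite !big_ord_recr big_ord0. Qed.
Lemma upD : Up 3 3 5.
Proof. apply: (@up_pset _ _ (fun i j => (i == 0) || (j == 2))); first by vm_compute. by rewrite !big_ord_recr big_ord0. Qed.
Lemma upE : Up 3 5 7.
Proof. apply: (@up_pset _ _ (fun i j => (i == 0) || (j == 4))); first by vm_compute. by rewrite !big_ord_recr big_ord0. Qed.

Lemma upU : Up 4 4 6. Proof. exact: (dsum_up upSC3 upSR3). Qed.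
Lemma up4 : Up 4 6 8. Proof. exact: (dsum_up upD upSR3). Qed.
Lemma up5 : Up 5 7 9. Proof. exact: (dsum_up upSR3 upU). Qed.
Lemma up6 : Up 6 8 11. Proof. exact: (dsum_up (dsum_up upSC4 upSR4) upSR3). Qed.
Lemma up7 : Up 7 9 13. Proof. exact: (dsum_up upE upU). Qed.

Lemma target_shift n a : target (n + 4 * a) = target n + 6 * a.
Proof.
rewrite /target; have := modn2 n; have := modn2 (n + 4 * a).
case: (odd (n + 4 * a)) => /= e1; case: (odd n) => /= e2; try lia.
case: ifP => /eqP e3; case: ifP => /eqP e4; lia.
Qed.

Lemma up_base n : 4 <= n <= 7 -> Up n (n+2) (target n).
Proof.
case/andP; case: n => [|[|[|[|[|[|[|[|n]]]]]]]] //= _ _.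
- exact: up4.
- exact: up5.
- exact: up6.
- exact: up7.
Qed.

Lemma up_all a : forall n, 4 <= n <= 7 -> Up (n + 4 * a) (n + 4 * a + 2) (target (n + 4 * a)).
Proof.
elim: a => [|a IH] n hn; first by rewrite muln0 addn0; apply: up_base.
rewrite target_shift.
have -> : n + 4 * a.+1 = (n + 4 * a) + 4 by rewrite mulnS; lia.
have -> : n + 4 * a + 4 + 2 = (n + 4 * a + 2) + 4 by lia.
have -> : target n + 6 * a.+1 = (target n + 6 * a) + 6 by rewrite mulnS; lia.
rewrite -target_shift; exact: (dsum_up (IH n hn) upU).
Qed.

Lemma up_main n : 4 <= n -> Up n (n+2) (target n).
Proof.
move=> n4; pose a := (n - 4) %/ 4; pose n0 := 4 + (n - 4) %% 4.
have e : n = n0 + 4 * a by rewrite /n0 /a; lia.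
rewrite e; apply: up_all; rewrite /n0; lia.
Qed.

Lemma bigmin_le (I : finType) (P : pred I) (F : I -> nat) x0 i :
  P i -> \big[minn/x0]_(j | P j) F j <= F i.
Proof.
move=> Pi; have : i \in index_enum I by rewrite mem_index_enum.
elim: (index_enum I) => // j s IH; rewrite inE big_cons => /orP [/eqP <-|/IH h].
- by rewrite Pi geq_minl.
- by case: (P j) => //; apply: leq_trans h; exact: geq_minr.
Qed.

Theorem theorem15 (n : nat) : 4 <= n ->
  gamma2t (KK n (n + 2)) =
    if ~~ odd n then (3 * n + 4) %/ 2
    else if n %% 4 == 1 then (3 * n + 3) %/ 2
    else (3 * n + 5) %/ 2.
Proof.
move=> n4; rewrite -/(target n); apply/eqP; rewrite eqn_leq; apply/andP; split.
- have [S [/and3P [GS _ _] cS]] := up_main n4.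
  apply: leq_trans cS; rewrite /gamma2t; exact: bigmin_le.
- rewrite /gamma2t; apply: (big_ind (fun x => target n <= x)).
  + rewrite card_prod !card_ord; apply: target_le => //; nia.
  + by move=> x y hx hy; rewrite leq_min hx hy.
  + by move=> S; apply: lower.
Qed.
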